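(* Let $\mathcal{A}\subseteq\mathbb{R}^3$ and let $\varphi_1,\ldots,\varphi_N\in L^2(\mathcal{A})$ be pairwise non-parallel with $\boldsymbol{\Psi}=\int_{\mathcal{A}}\boldsymbol{\varphi}^{\mathsf{H}}\boldsymbol{\varphi}\,\mathrm{d}\mathbf{r}$ positive definite, $\boldsymbol{\varphi}(\mathbf{r})=[\varphi_1(\mathbf{r}),\ldots,\varphi_N(\mathbf{r})]$, and eigendecomposition $\boldsymbol{\Psi}=\mathbf{U}\,\mathrm{diag}(\lambda_1,\ldots,\lambda_N)\mathbf{U}^{\mathsf{H}}$, $\lambda_n>0$. For Hermitian $\mathbf{M}$ let $T_{\mathbf{M}}$ be the operator on $L^2(\mathcal{A})$ with kernel $\delta(\mathbf{r}-\mathbf{r}')-\boldsymbol{\varphi}(\mathbf{r})\mathbf{M}\boldsymbol{\varphi}^{\mathsf{H}}(\mathbf{r}')$. Let $\overline{B}_\varphi=T_{\overline{\mathbf{B}}_{\boldsymbol\Psi}}$ with $\overline{\mathbf{B}}_{\boldsymbol\Psi}=\mathbf{U}\,\mathrm{diag}\big(\tfrac{1+\sqrt{1+\lambda_n}}{\lambda_n\sqrt{1+\lambda_n}}\big)\mathbf{U}^{\mathsf{H}}$ and $B_\varphi=T_{\mathbf{B}_{\boldsymbol\Psi}}$ with $\mathbf{B}_{\boldsymbol\Psi}=\mathbf{U}\,\mathrm{diag}\big(\tfrac{1+\sqrt{1+\lambda_n}}{\lambda_n}\big)\mathbf{U}^{\mathsf{H}}$. Then $\overline{B}_\varphi B_\varphi=B_\varphi\overline{B}_\varphi=\mathrm{Id}$,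 i.e. $\int_{\mathcal{A}}\overline{B}_\varphi(\mathbf{r}_1,\mathbf{r})B_\varphi(\mathbf{r},\mathbf{r}_2)\,\mathrm{d}\mathbf{r}=\int_{\mathcal{A}}B_\varphi(\mathbf{r}_2,\mathbf{r})\overline{B}_\varphi(\mathbf{r},\mathbf{r}_1)\,\mathrm{d}\mathbf{r}=\delta(\mathbf{r}_1-\mathbf{r}_2)$.
   Context: Kernels containing $\delta(\mathbf{r}-\mathbf{r}')$ denote the identity plus a finite-rank integral operator. *)

(* Defs.v *)
From HB Require Import structures.
From mathcomp Require Import all_boot all_order all_algebra.
From mathcomp Require Import all_classical all_reals all_analysis.
From mathcomp Require Import complex.
Set Implicit Arguments. Unset Strict Implicit. Unset Printing Implicit Defensive.
Import Order.TTheory GRing.Theory Num.Theory.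
Local Open Scope ring_scope.
Local Open Scope classical_set_scope.

Definition R3 (R : realType) := ((R * R) * R)%type.

Definition leb3 (R : realType) : set (R3 R) -> \bar R :=
  ((@lebesgue_measure R \x @lebesgue_measure R) \x @lebesgue_measure R)%E.

Definition cint (R : realType) (A : set (R3 R)) (f : R3 R -> R[i]) : R[i] :=
  Complex (Rintegral (@leb3 R) A (fun x => complex.Re (f x)))
          (Rintegral (@leb3 R) A (fun x => complex.Im (f x))).

Definition L2 (R : realType) (A : set (R3 R)) (f : R3 R -> R[i]) : Prop :=
  measurable_fun A (fun x => complex.Re (f x)) /\
  measurable_fun A (fun x => complex.Im (f x)) /\
  (\int[@leb3 R]_(x in A) ((complex.Re (f x)) ^+ 2 + (complex.Im (f x)) ^+ 2)%:E
     < +oo)%E.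

Definition parallel (R : realType) (A : set (R3 R)) (f g : R3 R -> R[i]) : Prop :=
  exists c : R[i],
    {ae @leb3 R, forall x, A x -> f x = c * g x} \/
    {ae @leb3 R, forall x, A x -> g x = c * f x}.

Definition adjmx (R : rcfType) m n (M : 'M[R[i]]_(m, n)) : 'M[R[i]]_(n, m) :=
  (map_mx (@conjc R) M)^T.

Definition hermitian (R : rcfType) n (M : 'M[R[i]]_n) : Prop := adjmx M = M.

Definition posdef (R : rcfType) n (M : 'M[R[i]]_n) : Prop :=
  hermitian M /\ forall v : 'cV[R[i]]_n, v != 0 -> 0 < (adjmx v *m M *m v) 0 0.

(* Gram matrix Psi = \int_A phi^H phi : Psi_ij = \int_A conj(phi_i) phi_j *)
Definition Gram (R : realType) N (A : set (R3 R)) (phi : 'I_N -> R3 R -> R[i])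
  : 'M[R[i]]_N :=
  \matrix_(i, j) cint A (fun r => conjc (phi i r) * phi j r).

(* The operator T_M on L^2(A) with kernel delta(r - r') - phi(r) M phi^H(r'):
   (T_M f)(r) = f(r) - sum_{i,j} phi_i(r) M_ij \int_A conj(phi_j(r')) f(r') dr' *)
Definition Top (R : realType) N (A : set (R3 R)) (phi : 'I_N -> R3 R -> R[i])
  (M : 'M[R[i]]_N) (f : R3 R -> R[i]) : R3 R -> R[i] :=
  fun r => f r - \sum_(i < N) \sum_(j < N)
              phi i r * M i j * cint A (fun r' => conjc (phi j r') * f r').

Definition diagC (R : rcfType) N (d : 'I_N -> R) : 'M[R[i]]_N :=
  diag_mx (\row_n ((d n)%:C)%C).

Definition Bbar_mx (R : rcfType) N (U : 'M[R[i]]_N) (lam : 'I_N -> R) :=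
  U *m diagC (fun n => (1 + Num.sqrt (1 + lam n)) / (lam n * Num.sqrt (1 + lam n)))
    *m adjmx U.

Definition B_mx (R : rcfType) N (U : 'M[R[i]]_N) (lam : 'I_N -> R) :=
  U *m diagC (fun n => (1 + Num.sqrt (1 + lam n)) / lam n) *m adjmx U.

(* Main.v *)
Require Import Defs.
From HB Require Import structures.
From mathcomp Require Import all_boot all_order all_algebra.
From mathcomp Require Import all_classical all_reals all_analysis.
From mathcomp Require Import complex ring lra measurable_realfun.
Import Order.TTheory GRing.Theory Num.Theory.
Local Open Scope ring_scope.
Local Open Scope classical_set_scope.
Section S.
Context (R : realType).
Lemma ReD (x y : R[i]) : complex.Re (x + y) = complex.Re x + complex.Re y.
Proof. by case: x; case: y. Qed.
Lemma ImD (x y : R[i]) : complex.Im (x + y) = complex.Im x + complex.Im y.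
Proof. by case: x; case: y. Qed.
Lemma ReN (x : R[i]) : complex.Re (- x) = - complex.Re x.
Proof. by case: x. Qed.
Lemma ImN (x : R[i]) : complex.Im (- x) = - complex.Im x.
Proof. by case: x. Qed.
Lemma ReM (x y : R[i]) : complex.Re (x * y) = complex.Re x * complex.Re y - complex.Im x * complex.Im y.
Proof. by case: x; case: y. Qed.
Lemma ImM (x y : R[i]) : complex.Im (x * y) = complex.Re x * complex.Im y + complex.Im x * complex.Re y.
Proof. by case: x => a b; case: y => c d /=; rewrite addrC. Qed.
Lemma Re0 : complex.Re (0 : R[i]) = 0. Proof. by []. Qed.
Lemma Im0 : complex.Im (0 : R[i]) = 0. Proof. by []. Qed.
Lemma Reconj (x : R[i]) : complex.Re (conjc x) = complex.Re x. Proof. by case: x. Qed.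
Lemma Imconj (x : R[i]) : complex.Im (conjc x) = - complex.Im x. Proof. by case: x. Qed.
Lemma bnd (a b c d : R) : `|a * c + b * d| <= (a ^+ 2 + b ^+ 2) + (c ^+ 2 + d ^+ 2).
Proof.
have h1 := sqr_ge0 (a + c); have h2 := sqr_ge0 (b + d).
have h3 := sqr_ge0 (a - c); have h4 := sqr_ge0 (b - d).
have h5 := sqr_ge0 a; have h6 := sqr_ge0 b; have h7 := sqr_ge0 c; have h8 := sqr_ge0 d.
rewrite ler_norml; apply/andP; split; nra. Qed.

Definition mu3 :=
  ((@lebesgue_measure R \x @lebesgue_measure R) \x @lebesgue_measure R)%E.

Context (A : set (R3 R)).
Definition meas_of d (T : measurableType d) (mu : {measure set T -> \bar R}) (B : set T) :=
  measurable B.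
Context (mA' : @meas_of _ _ mu3 A).
Let mA := mA'.
Lemma test (B : set (R3 R)) : measurable B -> @meas_of _ _ mu3 B.
Proof. move=> h; exact: h. Qed.

Definition I (g : R3 R -> R) := mu3.-integrable A (EFin \o g).

Lemma IB g h : I g -> I h -> I (fun x => g x - h x).
Proof.
move=> Ig Ih; have := integrableB mA Ig Ih.
by congr (_.-integrable _ _); apply/funext => x.
Qed.

Lemma ID g h : I g -> I h -> I (fun x => g x + h x).
Proof.
move=> Ig Ih; have := integrableD mA Ig Ih.
by congr (_.-integrable _ _); apply/funext => x.
Qed.

Lemma IZ k g : I g -> I (fun x => k * g x).
Proof.
move=> Ig; have := integrableZl mA k Ig.
by congr (_.-integrable _ _); apply/funext => x.
Qed.

Lemma I0 : I (fun _ => 0).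
Proof. by have := @integrable0 _ _ _ mu3 A; congr (_.-integrable _ _); apply/funext. Qed.

Lemma Isum (J : Type) (s : seq J) (h : J -> R3 R -> R) :
  (forall j, I (h j)) -> I (fun x => \sum_(j <- s) h j x).
Proof.
move=> Ih; elim: s => [|j s IH].
  by under [fun x => _]funext do rewrite big_nil; exact: I0.
by under [fun x => _]funext do rewrite big_cons; exact: ID.
Qed.

Lemma RintS (J : Type) (s : seq J) (h : J -> R3 R -> R) :
  (forall j, I (h j)) ->
  Rintegral mu3 A (fun x => \sum_(j <- s) h j x) = \sum_(j <- s) Rintegral mu3 A (h j).
Proof.
move=> Ih; elim: s => [|j s IH].
  under [fun x => _]funext do rewrite big_nil.
  by rewrite big_nil /Rintegral integral0.
under [fun x => _]funext do rewrite big_cons.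
rewrite big_cons RintegralD // ?IH //; [exact: Ih | exact: Isum].
Qed.

Lemma mAd : measurable A. Proof. exact: mA'. Qed.

Lemma fin_transfer (h : R3 R -> R) : (forall x, 0 <= h x) -> measurable_fun A h ->
  (\int[@leb3 R]_(x in A) (h x)%:E < +oo)%E ->
  (\int[mu3]_(x in A) (h x)%:E < +oo)%E.
Proof.
move=> h0 mh fin.
pose phi := (fun x : R3 R => x) : (measurableTypeR R * measurableTypeR R) * measurableTypeR R -> R3 R.
have mphi : measurable_fun setT phi.
  move=> _ Y mY; rewrite setTI; exact: mY.
have fin2 : (\int[pushforward mu3 phi]_(x in A) (h x)%:E < +oo)%E := fin.
rewrite ge0_integral_pushforward in fin2.
all: try (by apply/measurable_EFinP).
all: try (by move=> x _; rewrite lee_fin).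
all: try exact: mAd.
- exact: fin2.
- exact: mphi.
Qed.

Lemma L2_sq g : L2 A g -> I (fun x => complex.Re (g x) ^+ 2 + complex.Im (g x) ^+ 2).
Proof.
case=> mRe [mIm fin]; apply/integrableP; split.
  apply/measurable_EFinP; apply: measurable_funD; exact: measurable_funX.
have fin' := @fin_transfer (fun x => complex.Re (g x) ^+ 2 + complex.Im (g x) ^+ 2) (fun x => addr_ge0 (sqr_ge0 (complex.Re (g x))) (sqr_ge0 (complex.Im (g x))))
  (measurable_funD (measurable_funX 2 mRe) (measurable_funX 2 mIm)) fin.
rewrite (le_lt_trans _ fin')//; rewrite le_eqVlt; apply/orP; left; apply/eqP.
apply: eq_integral => x _ /=; rewrite ger0_norm //.
by rewrite addr_ge0 // sqr_ge0.
Qed.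

Lemma L2_prod g h : L2 A g -> L2 A h ->
  I (fun x => complex.Re (conjc (g x) * h x)) /\
  I (fun x => complex.Im (conjc (g x) * h x)).
Proof.
move=> Lg Lh; have Ig := @L2_sq g Lg; have Ih := @L2_sq h Lh.
have IGH := @ID _ _ Ig Ih.
case: Lg => mRg [mIg _]; case: Lh => mRh [mIh _].
split.
- apply: (le_integrable mA _ _ IGH).
    apply/measurable_EFinP.
    under [fun x => _]funext do rewrite ReM Reconj Imconj.
    apply: measurable_funB; apply: measurable_funM => //.
    exact: measurable_funN.
  move=> x _ /=; rewrite ReM Reconj Imconj mulNr opprK lee_fin.
  rewrite [X in _ <= X]ger0_norm; last by rewrite !addr_ge0 ?sqr_ge0.
  exact: bnd.
- apply: (le_integrable mA _ _ IGH).
    apply/measurable_EFinP.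
    under [fun x => _]funext do rewrite ImM Reconj Imconj.
    apply: measurable_funD; apply: measurable_funM => //.
    exact: measurable_funN.
  move=> x _ /=; rewrite ImM Reconj Imconj lee_fin.
  rewrite [X in _ <= X]ger0_norm; last by rewrite !addr_ge0 ?sqr_ge0.
  apply: le_trans (bnd (complex.Re (g x)) (- complex.Im (g x)) (complex.Im (h x)) (complex.Re (h x))) _.
  by rewrite sqrrN [X in _ + X <= _]addrC.
Qed.

Definition CI (h : R3 R -> R[i]) := I (fun x => complex.Re (h x)) /\ I (fun x => complex.Im (h x)).

Lemma cintE h : cint A h = Complex (Rintegral mu3 A (fun x => complex.Re (h x)))
  (Rintegral mu3 A (fun x => complex.Im (h x))).
Proof. by []. Qed.

Lemma CIB h1 h2 : CI h1 -> CI h2 -> CI (fun x => h1 x - h2 x).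
Proof.
move=> [a b] [c d]; split.
- under [fun x => _]funext do rewrite ReD ReN. exact: IB.
- under [fun x => _]funext do rewrite ImD ImN. exact: IB.
Qed.

Lemma CIZ k h : CI h -> CI (fun x => k * h x).
Proof.
move=> [a b]; split.
- under [fun x => _]funext do rewrite ReM. by apply: IB; apply: IZ.
- under [fun x => _]funext do rewrite ImM. by apply: ID; apply: IZ.
Qed.

Lemma CI0 : CI (fun _ => 0).
Proof. by split; exact: I0. Qed.

Lemma CIsum (J : Type) (s : seq J) (h : J -> R3 R -> R[i]) :
  (forall j, CI (h j)) -> CI (fun x => \sum_(j <- s) h j x).
Proof.
move=> Ih; elim: s => [|j s IH].
  by under [fun x => _]funext do rewrite big_nil; exact: CI0.
under [fun x => _]funext do rewrite big_cons.
have [a b] := Ih j; case: IH => c d; split.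
- under [fun x => _]funext do rewrite ReD. exact: ID.
- under [fun x => _]funext do rewrite ImD. exact: ID.
Qed.

Lemma cintB h1 h2 : CI h1 -> CI h2 ->
  cint A (fun x => h1 x - h2 x) = cint A h1 - cint A h2.
Proof.
move=> [a b] [c d]; rewrite !cintE.
under [fun x => complex.Re _]funext do rewrite ReD ReN.
under [fun x => complex.Im _]funext do rewrite ImD ImN.
by rewrite !RintegralB.
Qed.

Lemma cintZ k h : CI h -> cint A (fun x => k * h x) = k * cint A h.
Proof.
move=> [a b]; rewrite !cintE.
under [fun x => complex.Re _]funext do rewrite ReM.
under [fun x => complex.Im _]funext do rewrite ImM.
rewrite RintegralB ?RintegralD ?RintegralZl //; try (by apply: IZ).
by case: k => kr ki.
Qed.

Lemma cintS (J : Type) (s : seq J) (h : J -> R3 R -> R[i]) :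
  (forall j, CI (h j)) ->
  cint A (fun x => \sum_(j <- s) h j x) = \sum_(j <- s) cint A (h j).
Proof.
move=> Ih; elim: s => [|j s IH].
  under [fun x => _]funext do rewrite big_nil.
  by rewrite big_nil cintE /Rintegral !integral0.
under [fun x => _]funext do rewrite big_cons.
rewrite big_cons -IH.
have [a b] := Ih j; have [c d] := @CIsum J s h Ih.
rewrite !cintE.
under [fun x => complex.Re _]funext do rewrite ReD.
under [fun x => complex.Im _]funext do rewrite ImD.
by rewrite !RintegralD.
Qed.

Context (N : nat).
Context (phi : 'I_N -> R3 R -> R[i]).
Context (Lphi : forall n, L2 A (phi n)).

Definition cv (g : R3 R -> R[i]) : 'cV[R[i]]_N :=
  \col_j cint A (fun r => conjc (phi j r) * g r).

Lemma Top_eq M g r : Top A phi M g r = g r - \sum_i phi i r * (M *m cv g) i 0.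
Proof.
rewrite /Top; congr (_ - _); apply: eq_bigr => i _.
rewrite mxE mulr_sumr; apply: eq_bigr => j _; by rewrite mxE mulrA.
Qed.

Lemma cv_Top M f : L2 A f -> cv (Top A phi M f) = cv f - Gram A phi *m (M *m cv f).
Proof.
move=> Lf; apply/matrixP => j k; rewrite (ord1 k) !mxE.
set v := M *m cv f.
have -> : (fun r => conjc (phi j r) * Top A phi M f r) =
  (fun r => conjc (phi j r) * f r - \sum_i (v i 0) * (conjc (phi j r) * phi i r)).
  apply/funext => r; rewrite Top_eq mulrBr mulr_sumr; congr (_ - _).
  by apply: eq_bigr => i _; rewrite [RHS]mulrC -mulrA.
have CIf : CI (fun r => conjc (phi j r) * f r) by exact: L2_prod.
have CIp i : CI (fun r => conjc (phi j r) * phi i r) by exact: L2_prod.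
rewrite cintB //; last by apply: CIsum => i; apply: CIZ.
rewrite cintS; last by move=> i; apply: CIZ.
congr (_ - _); apply: eq_bigr => i _.
by rewrite cintZ // !mxE mulrC.
Qed.

Lemma comp M1 M2 f : L2 A f -> M1 + M2 = M1 *m Gram A phi *m M2 ->
  forall r, Top A phi M1 (Top A phi M2 f) r = f r.
Proof.
move=> Lf H r; rewrite Top_eq cv_Top // Top_eq.
set c := cv f; set G := Gram A phi.
have key : M2 *m c + M1 *m (c - G *m (M2 *m c)) = 0.
  rewrite mulmxBr !mulmxA addrA -mulmxDl [M2 + M1]addrC H.
  by rewrite subrr.
have K i : (M2 *m c) i 0 + (M1 *m (c - G *m (M2 *m c))) i 0 = 0.
  by move: key => /matrixP/(_ i 0); rewrite mxE [X in _ = X]mxE.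
rewrite -addrA -opprD -big_split /= big1 ?oppr0 ?addr0 // => i _.
by rewrite -mulrDr K mulr0.
Qed.
End S.

Lemma diagCM (R : rcfType) N (d e : 'I_N -> R) : diagC d *m diagC e = diagC (fun n => d n * e n).
Proof. by rewrite /diagC mulmx_diag; congr diag_mx; apply/rowP => j; rewrite !mxE rmorphM. Qed.

Lemma diagCD (R : rcfType) N (d e : 'I_N -> R) : diagC d + diagC e = diagC (fun n => d n + e n).
Proof. by rewrite /diagC -raddfD; congr diag_mx; apply/rowP => j; rewrite !mxE rmorphD. Qed.

Lemma key_mx (R : rcfType) N (U : 'M[R[i]]_N) (lam a b : 'I_N -> R) :
  adjmx U *m U = 1%:M -> (forall n, a n + b n = a n * lam n * b n) ->
  U *m diagC a *m adjmx U + U *m diagC b *m adjmx U =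
  (U *m diagC a *m adjmx U) *m (U *m diagC lam *m adjmx U) *m (U *m diagC b *m adjmx U).
Proof.
move=> UU ab.
have E : diagC a + diagC b = diagC a *m diagC lam *m diagC b.
  by rewrite !diagCM diagCD; congr diagC; apply/funext => n; rewrite ab.
rewrite -!mulmxA !(mulmxA (adjmx U) U) UU !mul1mx -mulmxDr -mulmxDl E.
by rewrite !mulmxA.
Qed.

Lemma real_id (R : rcfType) (l : R) : 0 < l ->
  let s := Num.sqrt (1 + l) in
  (1 + s) / (l * s) + (1 + s) / l = (1 + s) / (l * s) * l * ((1 + s) / l).
Proof.
move=> l0 s.
have s0 : 0 < s by rewrite sqrtr_gt0 addr_gt0.
have ln : l != 0 by rewrite gt_eqF.
have sn : s != 0 by rewrite gt_eqF.
by field; rewrite ln sn.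
Qed.

Theorem lemma7 (R : realType) (N : nat) (A : set (R3 R))
  (phi : 'I_N -> R3 R -> R[i]) (U : 'M[R[i]]_N) (lam : 'I_N -> R) :
  measurable A ->
  (forall n, L2 A (phi n)) ->
  (forall i j, i != j -> ~ parallel A (phi i) (phi j)) ->
  posdef (Gram A phi) ->
  adjmx U *m U = 1%:M ->
  Gram A phi = U *m diagC lam *m adjmx U ->
  (forall n, 0 < lam n) ->
  forall f : R3 R -> R[i], L2 A f ->
    (forall r, A r -> Top A phi (Bbar_mx U lam) (Top A phi (B_mx U lam) f) r = f r) /\
    (forall r, A r -> Top A phi (B_mx U lam) (Top A phi (Bbar_mx U lam) f) r = f r).
Proof.
move=> mA Lphi _ _ UU HG lam0 f Lf.
split => r _; apply: (@comp R A mA N phi Lphi) => //; rewrite HG.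
- apply: key_mx => // n; exact: real_id.
- apply: key_mx => // n.
  move: (@real_id _ _ (lam0 n)) => /= E; rewrite addrC E; ring.
Qed.
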